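(* Let $\gamma$ be a meromorphic family in $\mathrm{GL}_n(\mathbb C)$ with exponents $m_1\ge\dots\ge m_n$, let $k_1>\dots>k_\tau$ be the distinct values among the $m_i$, and let $\alpha_j$ be the number of indices $i$ with $m_i=k_j$. Then (a) for each $j$ the limit $P_j:=\lim_{z\to0}\mathrm{graph}(z^{k_j}\gamma(z))$ exists in the Grassmannian $\mathrm{Gr}_n$ of $n$-dimensional subspaces of $\mathbb C^n\oplus\mathbb C^n$, and $\mathrm{rk}\,P_j=\alpha_j$; (b) the collection $\mathcal P^\gamma=(P_1,\dots,P_\tau)$ is a hinge.
   Context: A meromorphic family is a map $\gamma$ from a punctured disc $0<|z|<\varepsilon$ to $\mathrm{GL}_n(\mathbb C)$ whose matrix entries are holomorphic there with poles or removable singularities at $0$. Every such $\gamma$ can be written $\gamma(z)=a(z)\,\mathrm{diag}(z^{-m_1},\dots,z^{-m_n})\,b(z)$ with $a,b$ holomorphic near $0$ with $a(0),b(0)$ invertible and integers $m_1\ge\dots\ge m_n$ uniquely determined by $\gamma$; these are the exponents. For a subspace (linear relation) $P\subset V\oplus V$, $V=\mathbb C^n$: $\mathrm{Ker}\,P=\{v:v\oplus0\in P\}$, $\mathrm{Dom}\,P$ and $\mathrm{Im}\,P$ are the projections of $P$ to the first and second summands, $\mathrm{Indef}\,P=\{w:0\oplus w\in P\}$, $\mathrm{rk}\,P=\dim\mathrm{Dom}\,P-\dim\mathrm{Ker}\,P$. A hinge is a sequence $(P_1,\dots,P_k)$ of $n$-dimensional subspaces of $V\oplus V$ such that $\mathrm{Ker}\,P_j=\mathrm{Dom}\,P_{j+1}$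 and $\mathrm{Im}\,P_j=\mathrm{Indef}\,P_{j+1}$ for $1\le j\le k-1$, $\mathrm{Dom}\,P_1=V$, $\mathrm{Im}\,P_k=V$, and $\mathrm{rk}\,P_j>0$ for all $j$. *)

(* Defs.v *)
(* Complex numbers: C R := R[i] (from
   mathcomp-real-closed) for R : realType, viewed (via ^o) as a normed field
   over itself, so that [derivable] is complex differentiability. *)
From HB Require Import structures.
From mathcomp Require Import all_boot all_order all_algebra.
From mathcomp Require Import all_classical all_reals all_analysis.
From mathcomp Require Import complex.
Set Implicit Arguments. Unset Strict Implicit. Unset Printing Implicit Defensive.
Import Order.TTheory GRing.Theory Num.Theory.
Import numFieldNormedType.Exports.
Local Open Scope ring_scope.
Local Open Scope classical_set_scope.

Definition Cx (R : realType) := (R[i])^o.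

Definition holo_on (R : realType) (D : set (Cx R)) (f : Cx R -> Cx R) :=
  forall z, D z -> derivable f z 1.

Definition disc (R : realType) (e : Cx R) : set (Cx R) := [set z | `|z| < e].
Definition pdisc (R : realType) (e : Cx R) : set (Cx R) :=
  [set z | 0 < `|z| < e].

(* A meromorphic family: gamma is defined (invertible) on a punctured disc
   0<|z|<eps, its entries are holomorphic there, and each entry has a pole or a
   removable singularity at 0 (i.e. z^N * entry extends holomorphically to 0). *)
Definition meromorphic_family (R : realType) (n : nat)
    (gamma : Cx R -> 'M[Cx R]_n) :=
  exists eps : Cx R, 0 < eps /\
    (forall z, pdisc eps z -> gamma z \in unitmx) /\
    (forall i j, holo_on (pdisc eps) (fun z => gamma z i j)) /\
    (forall i j, exists N : nat, exists h : Cx R -> Cx R,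
        holo_on (disc eps) h /\
        forall z, pdisc eps z -> h z = z ^+ N * gamma z i j).

Definition exponents_of (R : realType) (n : nat)
    (gamma : Cx R -> 'M[Cx R]_n) (m : 'I_n -> int) :=
  (forall i j : 'I_n, (i <= j)%N -> m j <= m i) /\
  exists delta : Cx R, 0 < delta /\
  exists a b : Cx R -> 'M[Cx R]_n,
    (forall i j, holo_on (disc delta) (fun z => a z i j)) /\
    (forall i j, holo_on (disc delta) (fun z => b z i j)) /\
    a 0 \in unitmx /\ b 0 \in unitmx /\
    forall z, pdisc delta z ->
      gamma z = a z *m diag_mx (\row_i (z ^ (- m i))) *m b z.

(* Linear relations P in V (+) V, V = C^n (row vectors), are represented by
   matrices 'M_(n + n) through their row space (mxalgebra, %MS). *)
Definition pr1mx (R : realType) (n : nat) : 'M[Cx R]_(n + n, n) :=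
  col_mx 1%:M 0.
Definition pr2mx (R : realType) (n : nat) : 'M[Cx R]_(n + n, n) :=
  col_mx 0 1%:M.

Definition Dom (R : realType) (n : nat) (P : 'M[Cx R]_(n + n)) : 'M[Cx R]_(n + n, n) :=
  P *m pr1mx R n.
Definition Im (R : realType) (n : nat) (P : 'M[Cx R]_(n + n)) : 'M[Cx R]_(n + n, n) :=
  P *m pr2mx R n.
Definition Ker (R : realType) (n : nat) (P : 'M[Cx R]_(n + n)) : 'M[Cx R]_(n + n, n) :=
  (P :&: row_mx (1%:M : 'M[Cx R]_n) 0)%MS *m pr1mx R n.
Definition Indef (R : realType) (n : nat) (P : 'M[Cx R]_(n + n)) : 'M[Cx R]_(n + n, n) :=
  (P :&: row_mx (0 : 'M[Cx R]_n) 1%:M)%MS *m pr2mx R n.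

Definition rk (R : realType) (n : nat) (P : 'M[Cx R]_(n + n)) : nat :=
  (\rank (Dom P) - \rank (Ker P))%N.

(* graph of A : v |-> A v, as the row space of the rows e_i (+) (A e_i)^T *)
Definition graph (R : realType) (n : nat) (A : 'M[Cx R]_n) : 'M[Cx R]_(n, n + n) :=
  row_mx 1%:M A^T.

(* Convergence in the Grassmannian Gr_n of n-dimensional subspaces of C^n (+) C^n,
   with its standard (quotient-of-frames) topology: S(z) -> P as z -> 0 (z <> 0)
   iff P is n-dimensional and, for z near 0, S(z) admits an n-frame M(z)
   (same row space) converging entrywise to an n-frame of P. *)
Definition gr_lim (R : realType) (n : nat)
    (S : Cx R -> 'M[Cx R]_(n, n + n)) (P : 'M[Cx R]_(n + n)) :=
  \rank P = n /\
  exists (M : Cx R -> 'M[Cx R]_(n, n + n)) (M0 : 'M[Cx R]_(n, n + n)),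
    (\forall z \near (0 : Cx R)^', (M z == S z)%MS /\ \rank (M z) = n) /\
    (forall i j, M z i j @[z --> (0 : Cx R)^'] --> M0 i j) /\
    (M0 == P)%MS /\ \rank M0 = n.

Definition hinge (R : realType) (n k : nat) (P : 'I_k -> 'M[Cx R]_(n + n)) :=
  (forall j, \rank (P j) = n) /\
  (forall j : 'I_k, forall j' : 'I_k, j'.+1 = j :> nat ->
     (Ker (P j') == Dom (P j))%MS /\ (Im (P j') == Indef (P j))%MS) /\
  (forall j : 'I_k, j = 0%N :> nat -> (Dom (P j) == 1%:M)%MS) /\
  (forall j : 'I_k, j.+1 = k -> (Im (P j) == 1%:M)%MS) /\
  (forall j, (0 < rk (P j))%N).

(* Main.v *)
Require Import Defs.
From HB Require Import structures.
From mathcomp Require Import all_boot all_order all_algebra.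
From mathcomp Require Import all_classical all_reals all_analysis.
From mathcomp Require Import complex.
Import Order.TTheory GRing.Theory Num.Theory.
Import numFieldNormedType.Exports.
Local Open Scope ring_scope.
Local Open Scope classical_set_scope.
Section LA.
Variable R : realType.
Variable n : nat.
Local Notation K := (Cx R).

Definition Dg (f : 'I_n -> bool) : 'M[K]_n := diag_mx (\row_i (f i)%:R).

Lemma Dg_eq f g : f =1 g -> Dg f = Dg g.
Proof. by move=> e; rewrite /Dg; congr diag_mx; apply/rowP=> i; rewrite !mxE e. Qed.

Lemma DgM f g : Dg f *m Dg g = Dg (fun i => f i && g i).
Proof.
rewrite /Dg mulmx_diag; congr diag_mx; apply/rowP => i; rewrite !mxE.
by case: (f i); case: (g i); rewrite ?mul1r ?mul0r.
Qed.

Lemma Dg1 : Dg (fun _ => true) = 1%:M.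
Proof. by apply/matrixP => i j; rewrite !mxE. Qed.

Lemma Dg0 : Dg (fun _ => false) = 0.
Proof. by apply/matrixP => i j; rewrite !mxE mul0rn. Qed.

Lemma DgD f g : (forall i, ~~ (f i && g i)) -> Dg f + Dg g = Dg (fun i => f i || g i).
Proof.
move=> H; apply/matrixP => i j; rewrite !mxE -mulrnDl.
by move: (H i); case: (f i); case: (g i); rewrite //= ?addr0 ?add0r.
Qed.

Lemma rank_Dg f : \rank (Dg f) = #|f|.
Proof.
pose h := fun k : 'I_#|f| => @enum_val _ (mem f) k.
pose X := rowsub h (1%:M : 'M[K]_n).
have eqX : (X == Dg f)%MS.
  have -> : X = rowsub h (Dg f).
    apply/matrixP => k j; rewrite !mxE.
    by have := enum_valP k; rewrite /h => H; have -> : f (enum_val k) = true by exact: H.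
  apply/andP; split; first exact: rowsub_sub.
  apply/row_subP => i; case fi: (f i).
    have Hi : i \in mem f by [].

    have <- : h (enum_rank_in Hi i) = i by rewrite /h enum_rankK_in.
    have -> : row (h (enum_rank_in Hi i)) (Dg f) = row (enum_rank_in Hi i) (rowsub h (Dg f)).
      by apply/rowP => j; rewrite !mxE.
    exact: row_sub.
  have -> : row i (Dg f) = 0 by apply/rowP => j; rewrite !mxE fi mul0rn.
  exact: sub0mx.
rewrite -(eqmx_rank eqX).
have : row_free X.
  apply/row_freeP; exists X^T.
  rewrite /X -rowsubE; apply/matrixP => k l; rewrite !mxE.
  by rewrite (inj_eq (@enum_val_inj _ (mem f))) eq_sym.
by move/eqnP.
Qed.


Lemma colmx0_eq m1 m2 p (X : 'M[K]_(m1,p)) : eqmx (col_mx X (0 : 'M[K]_(m2,p))) X.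
Proof. exact: eqmx_trans (eqmx_sym (addsmxE _ _)) (addsmx0 _ _). Qed.

Section Rel.
Variables (f g : 'I_n -> bool) (B A : 'M[K]_n).
Hypothesis (uB : B \in unitmx) (uA : A \in unitmx) (Hfg : forall i, f i || g i).
Definition M0 : 'M[K]_(n, n + n) := row_mx (Dg f *m B) (Dg g *m A).
Definition P0 : 'M[K]_(n + n) := col_mx M0 0.
Let Kf := fun i => f i && ~~ g i.
Let Kg := fun i => g i && ~~ f i.

Lemma rank_M0 : \rank M0 = n.
Proof.
have : row_free M0.
  apply/row_freeP; exists (col_mx (invmx B *m Dg f) (invmx A *m Dg Kg)).
  rewrite /M0 mul_row_col !mulmxA (mulmxK uB) (mulmxK uA) !DgM DgD.
    by rewrite -Dg1; apply: Dg_eq => i /=; move: (Hfg i); rewrite /Kg; case: (f i); case: (g i).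
  by move=> i; rewrite /Kg; case: (f i); case: (g i).
by move/eqnP.
Qed.

Lemma P0_M0 : eqmx P0 M0.
Proof. exact: colmx0_eq. Qed.

Lemma rank_P0 : \rank P0 = n.
Proof. by rewrite P0_M0 rank_M0. Qed.

Lemma Dom_P0 : (Dom P0 == Dg f *m B)%MS.
Proof.
rewrite /Dom /P0 /pr1mx mul_col_mx mul0mx /M0 mul_row_col mulmx1 mulmx0 addr0.
by apply/eqmxP; exact: colmx0_eq.
Qed.

Lemma Im_P0 : (Defs.Im P0 == Dg g *m A)%MS.
Proof.
rewrite /Defs.Im /P0 /pr2mx mul_col_mx mul0mx /M0 mul_row_col mulmx1 mulmx0 add0r.
by apply/eqmxP; exact: colmx0_eq.
Qed.

Lemma Ker_P0 : (Ker P0 == Dg Kf *m B)%MS.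
Proof.
rewrite /Ker; set C := capmx P0 _.
apply/andP; split.
  have CP : (C <= M0)%MS by rewrite -P0_M0; exact: capmxSl.
  case/submxP: CP => Y defC.
  have C2 : C *m pr2mx R n = 0.
    have : (C <= row_mx (1%:M : 'M[K]_n) 0)%MS by exact: capmxSr.
    case/submxP => Z ->.
    by rewrite -mulmxA /pr2mx mul_row_col mulmx0 mul0mx addr0 mulmx0.
  have YG : Y *m Dg g = 0.
    rewrite defC -mulmxA /pr2mx /M0 mul_row_col mulmx0 add0r mulmx1 in C2.
    by rewrite -(mulmxK uA (Y *m Dg g)) -(mulmxA Y) C2 mul0mx.
  rewrite defC -mulmxA /pr1mx /M0 mul_row_col mulmx1 mulmx0 addr0 mulmxA.
  have -> : Y *m Dg f = Y *m Dg Kf.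
    have -> : Dg f = Dg Kf + Dg g *m Dg f.
      rewrite DgM DgD; first by apply: Dg_eq => i; rewrite /Kf; case: (f i); case: (g i).
      by move=> i; rewrite /Kf; case: (f i); case: (g i).
    by rewrite mulmxDr mulmxA YG mul0mx addr0.
  rewrite -mulmxA; exact: submxMl.
have E : Dg Kf *m M0 = row_mx (Dg Kf *m B) 0.
  rewrite /M0 mul_mx_row !mulmxA !DgM; congr row_mx.
    by congr (_ *m _); apply: Dg_eq => i; rewrite /Kf; case: (f i); case: (g i).
  rewrite (@Dg_eq _ (fun _ => false)) ?Dg0 ?mul0mx //.
  by move=> i; rewrite /Kf; case: (f i); case: (g i).
have S : (row_mx (Dg Kf *m B) 0 <= C)%MS.
  rewrite sub_capmx; apply/andP; split.
    by rewrite P0_M0 -E; exact: submxMl.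
  have -> : row_mx (Dg Kf *m B) (0 : 'M[K]_n) = (Dg Kf *m B) *m row_mx (1%:M : 'M[K]_n) 0.
    by rewrite mul_mx_row mulmx1 mulmx0.
  exact: submxMl.
have := submxMr (pr1mx R n) S.
by rewrite /pr1mx mul_row_col mulmx1 mul0mx addr0.
Qed.

Lemma Indef_P0 : (Indef P0 == Dg Kg *m A)%MS.
Proof.
rewrite /Indef; set C := capmx P0 _.
apply/andP; split.
  have CP : (C <= M0)%MS by rewrite -P0_M0; exact: capmxSl.
  case/submxP: CP => Y defC.
  have C1 : C *m pr1mx R n = 0.
    have : (C <= row_mx (0 : 'M[K]_n) 1%:M)%MS by exact: capmxSr.
    case/submxP => Z ->.
    by rewrite -mulmxA /pr1mx mul_row_col mulmx0 mul0mx addr0 mulmx0.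
  have YF : Y *m Dg f = 0.
    rewrite defC -mulmxA /pr1mx /M0 mul_row_col mulmx0 addr0 mulmx1 in C1.
    by rewrite -(mulmxK uB (Y *m Dg f)) -(mulmxA Y) C1 mul0mx.
  rewrite defC -mulmxA /pr2mx /M0 mul_row_col mulmx1 mulmx0 add0r mulmxA.
  have -> : Y *m Dg g = Y *m Dg Kg.
    have -> : Dg g = Dg Kg + Dg f *m Dg g.
      rewrite DgM DgD; first by apply: Dg_eq => i; rewrite /Kg; case: (f i); case: (g i).
      by move=> i; rewrite /Kg; case: (f i); case: (g i).
    by rewrite mulmxDr mulmxA YF mul0mx addr0.
  rewrite -mulmxA; exact: submxMl.
have E : Dg Kg *m M0 = row_mx 0 (Dg Kg *m A).
  rewrite /M0 mul_mx_row !mulmxA !DgM; congr row_mx.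
    rewrite (@Dg_eq _ (fun _ => false)) ?Dg0 ?mul0mx //.
    by move=> i; rewrite /Kg; case: (f i); case: (g i).
  by congr (_ *m _); apply: Dg_eq => i; rewrite /Kg; case: (f i); case: (g i).
have S : (row_mx 0 (Dg Kg *m A) <= C)%MS.
  rewrite sub_capmx; apply/andP; split.
    by rewrite P0_M0 -E; exact: submxMl.
  have -> : row_mx (0 : 'M[K]_n) (Dg Kg *m A) = (Dg Kg *m A) *m row_mx (0 : 'M[K]_n) 1%:M.
    by rewrite mul_mx_row mulmx1 mulmx0.
  exact: submxMl.
have := submxMr (pr2mx R n) S.
by rewrite /pr2mx mul_row_col mulmx1 mul0mx add0r.
Qed.

Lemma rank_DgM h (X : 'M[K]_n) : X \in unitmx -> \rank (Dg h *m X) = #|h|.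
Proof. by move=> uX; rewrite mxrankMfree ?row_free_unit // rank_Dg. Qed.

Lemma rk_P0 : rk P0 = #|[pred i | f i && g i]|.
Proof.
rewrite /rk (eqmx_rank Dom_P0) (eqmx_rank Ker_P0) !rank_DgM //.
rewrite -(cardID g f).
have -> : #|[predD f & g]| = #|Kf| by apply: eq_card => i; rewrite !inE /Kf andbC.
rewrite addnK; apply: eq_card => i; rewrite !inE andbC //.
Qed.
End Rel.

Lemma cvg_sum_C (T : Type) (F : set_system T) (FF : Filter F) (I : Type) (r : seq I) (P : pred I)
  (g : I -> T -> K) (l : I -> K) :
  (forall i, g i z @[z --> F] --> l i) ->
  \sum_(i <- r | P i) g i z @[z --> F] --> \sum_(i <- r | P i) l i.
Proof.
move=> H; elim: r => [|i r IH].
  rewrite big_nil. under eq_cvg do rewrite big_nil. exact: cvg_cst.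
rewrite big_cons; under eq_cvg do rewrite big_cons.
case: (P i); last exact: IH.
by apply: cvgD; [exact: H | exact: IH].
Qed.
Lemma cvg_prod_C (T : Type) (F : set_system T) (FF : Filter F) (I : Type) (r : seq I) (P : pred I)
  (g : I -> T -> K) (l : I -> K) :
  (forall i, g i z @[z --> F] --> l i) ->
  \prod_(i <- r | P i) g i z @[z --> F] --> \prod_(i <- r | P i) l i.
Proof.
move=> H; elim: r => [|i r IH].
  rewrite big_nil. under eq_cvg do rewrite big_nil. exact: cvg_cst.
rewrite big_cons; under eq_cvg do rewrite big_cons.
case: (P i); last exact: IH.
by apply: cvgM; [exact: H | exact: IH].
Qed.
Lemma cvg_det (T : Type) (F : set_system T) (FF : Filter F) (p : nat)
  (f : T -> 'M[K]_p) (L : 'M[K]_p) :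
  (forall i j, f z i j @[z --> F] --> L i j) ->
  \det (f z) @[z --> F] --> \det L.
Proof.
move=> H. rewrite /determinant. under eq_cvg do rewrite /determinant.
apply: cvg_sum_C => s.
apply: cvgM; first exact: cvg_cst.
by apply: cvg_prod_C => i; exact: H.
Qed.
Lemma holo_cont (e : K) (f : K -> K) : 0 < e -> holo_on (disc e) f ->
  f z @[z --> (0 : K)^'] --> f 0.
Proof.
move=> e0 h; apply: cvg_within_filter.
have := h 0.
rewrite /disc /= normr0 => /(_ e0) /derivable1_diffP.
move=> /differentiable_continuous. exact.
Qed.
Lemma cvg_invmx (T : Type) (F : set_system T) (FF : Filter F) p (f : T -> 'M[K]_p) (L : 'M[K]_p) :
  L \in unitmx -> (\forall z \near F, f z \in unitmx) ->
  (forall i j, f z i j @[z --> F] --> L i j) ->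
  forall i j, invmx (f z) i j @[z --> F] --> invmx L i j.
Proof.
move=> uL uf H i j.
have HE : {near F, (fun z => (\det (f z))^-1 * \adj (f z) i j) =1 (fun z => invmx (f z) i j)}.
  apply: (filterS _ uf) => z uz /=. by rewrite /invmx uz !mxE.
apply: cvg_trans (near_eq_cvg HE) _.
rewrite /invmx uL mxE.
apply: cvgM.
  apply: cvgV; first by rewrite -unitfE -unitmxE.
  exact: cvg_det.
have -> : \adj L i j = (-1)^+(j+i) * \det (row' j (col' i L)) by rewrite mxE.
under eq_cvg do rewrite mxE /cofactor.
apply: cvgM; first exact: cvg_cst.
apply: cvg_det => a b.
Timeout 20 have -> : (row' j (col' i L)) a b = L (lift j a) (lift i b) by rewrite !mxE.

Timeout 20 have -> : (fun z => row' j (col' i (f z)) a b) = (fun z => f z (lift j a) (lift i b)).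
  by apply: funext => z; rewrite !mxE.

Timeout 30 exact: (H (lift j a) (lift i b)).
Qed.
End LA.

Lemma cvg_expr0 (R : realType) p : z ^+ p @[z --> (0 : Cx R)^'] --> (0 : Cx R) ^+ p.
Proof.
elim: p => [|p IH].
  rewrite expr0; under eq_cvg do rewrite expr0; exact: cvg_cst.
rewrite exprS; under eq_cvg do rewrite exprS.
apply: cvgM; last exact: IH.
apply: cvg_within_filter; exact: cvg_id.
Qed.

Lemma rank_graph (R : realType) n (A : 'M[Cx R]_n) : \rank (graph A) = n.
Proof.
have : row_free (graph A).
  apply/row_freeP; exists (col_mx 1%:M 0).
  by rewrite /graph mul_row_col mulmx1 mulmx0 addr0.
by move/eqnP.
Qed.

Section GL.
Variables (R : realType) (n : nat) (gamma : Cx R -> 'M[Cx R]_n) (m : 'I_n -> int).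
Variables (eps delta : Cx R) (a b : Cx R -> 'M[Cx R]_n) (kk : int).
Hypotheses (eps0 : 0 < eps) (delta0 : 0 < delta).
Hypothesis gunit : forall z, pdisc eps z -> gamma z \in unitmx.
Hypothesis ha : forall i j, holo_on (disc delta) (fun z => a z i j).
Hypothesis hb : forall i j, holo_on (disc delta) (fun z => b z i j).
Hypotheses (ua0 : a 0 \in unitmx) (ub0 : b 0 \in unitmx).
Hypothesis hg : forall z, pdisc delta z ->
  gamma z = a z *m diag_mx (\row_i (z ^ (- m i))) *m b z.

Let e i := kk - m i.
Let Fe i (z : Cx R) : Cx R := if 0 <= e i then 1 else z ^+ `|e i|%N.
Let Ge i (z : Cx R) : Cx R := if 0 <= e i then z ^+ `|e i|%N else 1.
Let Mf z : 'M[Cx R]_(n, n + n) :=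
  row_mx (diag_mx (\row_i Fe i z) *m (invmx (b z))^T) (diag_mx (\row_i Ge i z) *m (a z)^T).

Let ff := fun i => m i <= kk.
Let gg := fun i => kk <= m i.

Lemma Mf0 : Mf 0 = M0 R n ff gg (invmx (b 0))^T (a 0)^T.
Proof.
rewrite /Mf /M0; congr row_mx; congr (_ *m _); apply/matrixP => i j; rewrite !mxE /Fe /Ge /e /ff /gg subr_ge0.
  case: ifP => h //; rewrite expr0n absz_eq0 subr_eq0.
  by move/negbT: h; rewrite -ltNge => /lt_eqF ->.
case: ifP => h.
  rewrite expr0n absz_eq0 subr_eq0.
  by case: (eqVneq kk (m i)) => [->|ne]; rewrite ?lexx // le_eqVlt (negPf ne) /= ltNge h.
by move/negbT: h; rewrite -ltNge => /ltW ->.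
Qed.


Lemma near_good : \forall z \near (0 : Cx R)^', [/\ z != 0, a z \in unitmx, b z \in unitmx &
   gamma z = a z *m diag_mx (\row_i (z ^ (- m i))) *m b z].
Proof.
near=> z.
have z0 : z != 0 by near: z; exact: nbhs_dnbhs_neq.
have ze : `|z| < eps by near: z; apply: nbhs_dnbhs; exact: (@nbhs0_lt (Cx R) (Cx R) _ eps0).
have zd : `|z| < delta by near: z; apply: nbhs_dnbhs; exact: (@nbhs0_lt (Cx R) (Cx R) _ delta0).
have hgz : gamma z = a z *m diag_mx (\row_i (z ^ (- m i))) *m b z.
  by apply: hg; rewrite /pdisc /= normr_gt0 z0 zd.
have gu : gamma z \in unitmx by apply: gunit; rewrite /pdisc /= normr_gt0 z0 ze.
rewrite hgz !unitmx_mul in gu; case/andP: gu => /andP [ua _] ub.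
by split.
Unshelve. all: by end_near.
Qed.

Lemma Mf_eq z : z != 0 -> b z \in unitmx ->
  gamma z = a z *m diag_mx (\row_i (z ^ (- m i))) *m b z ->
  Mf z = (diag_mx (\row_i Fe i z) *m (invmx (b z))^T) *m graph ((z ^ kk) *: gamma z).
Proof.
move=> z0 ub ->.
rewrite /graph mul_mx_row mulmx1 /Mf; congr row_mx.
rewrite scalemxAl scalemxAr.
have -> : z ^ kk *: diag_mx (\row_i (z ^ (- m i))) = diag_mx (\row_i (z ^ kk * z ^ (- m i))).
  by apply/matrixP => i j; rewrite !mxE mulrnAr.
rewrite !trmx_mul tr_diag_mx -!mulmxA.
rewrite (mulmxA (invmx (b z))^T) -trmx_mul mulmxV // trmx1 mul1mx mulmxA mulmx_diag.
congr (_ *m _); congr diag_mx; apply/rowP => i; rewrite !mxE.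
rewrite -expfzDr // /Fe /Ge /e.
case: (kk - m i) => p.
  by rewrite le0z_nat mul1r.
have -> : (0 <= Negz p) = false by [].
change (1 = z ^+ p.+1 * (z ^+ p.+1)^-1).
by rewrite mulfV // expf_neq0.
Qed.

Lemma X_unit z : z != 0 -> b z \in unitmx ->
  (diag_mx (\row_i Fe i z) *m (invmx (b z))^T) \in unitmx.
Proof.
move=> z0 ub.
rewrite unitmx_mul unitmx_tr unitmx_inv ub andbT unitmxE det_diag unitfE.
apply/prodf_neq0 => i _; rewrite mxE /Fe; case: ifP => _; [exact: oner_neq0 | exact: expf_neq0].
Qed.


Lemma gl : gr_lim (fun z => graph ((z ^ kk) *: gamma z)) (P0 R n ff gg (invmx (b 0))^T (a 0)^T).
Proof.
have uB : (invmx (b 0))^T \in unitmx by rewrite unitmx_tr unitmx_inv.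
have uA : (a 0)^T \in unitmx by rewrite unitmx_tr.
have Hfg : forall i, ff i || gg i by move=> i; exact: le_total.
split; first exact: rank_P0.
exists Mf, (Mf 0); split; [|split; [|split]].
- apply: filterS near_good => z [z0 ua ub hgz] /=.
  rewrite (Mf_eq z z0 ub hgz).
  have fX := X_unit z z0 ub; rewrite -row_full_unit in fX.
  split; first by apply/eqmxP; exact: eqmxMfull.
  by rewrite (eqmxMfull _ fX) rank_graph.
- move=> i j; rewrite -[j]splitK; case: (fintype.split j) => j' /=.
    have -> : (fun z => Mf z i (lshift n j')) = (fun z => Fe i z * invmx (b z) j' i).
      by apply: funext => z; rewrite /Mf row_mxEl mul_diag_mx !mxE.
    rewrite /Mf row_mxEl mul_diag_mx !mxE.
    apply: cvgM.
      rewrite /Fe; case: ifP => _; [exact: cvg_cst | exact: cvg_expr0].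
    apply: (@cvg_invmx R _ _ _ n b (b 0) ub0).
      by apply: filterS near_good => z [].
    move=> i' j''; exact: (@holo_cont R delta _ delta0 (hb i' j'')).
  have -> : (fun z => Mf z i (rshift n j')) = (fun z => Ge i z * a z j' i).
    by apply: funext => z; rewrite /Mf row_mxEr mul_diag_mx !mxE.
  rewrite /Mf row_mxEr mul_diag_mx !mxE.
  apply: cvgM.
    rewrite /Ge; case: ifP => _; [exact: cvg_expr0 | exact: cvg_cst].
  exact: (@holo_cont R delta _ delta0 (ha j' i)).
- by rewrite Mf0; apply/eqmxP; exact: eqmx_sym (P0_M0 _ _ _ _ _ _).
- by rewrite Mf0 rank_M0.
Qed.

End GL.

Theorem proposition3p2 (R : realType) (n : nat)
    (gamma : Cx R -> 'M[Cx R]_n) (m : 'I_n -> int)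
    (tau : nat) (k : 'I_tau -> int) :
  meromorphic_family gamma ->
  exponents_of gamma m ->
  (forall j j' : 'I_tau, (j < j')%N -> k j' < k j) ->
  (forall i, exists j, m i = k j) ->
  (forall j, exists i, m i = k j) ->
  exists P : 'I_tau -> 'M[Cx R]_(n + n),
    (forall j : 'I_tau,
       gr_lim (fun z => graph ((z ^ k j) *: gamma z)) (P j) /\
       rk (P j) = #|[pred i : 'I_n | m i == k j]|) /\
    hinge P.
Proof.
move=> [eps [eps0 [gunit _]]] [mono [delta [delta0 [a [b [ha [hb [ua0 [ub0 hg]]]]]]]]] kdec mk km.
have uB : (invmx (b 0))^T \in unitmx by rewrite unitmx_tr unitmx_inv.
have uA : (a 0)^T \in unitmx by rewrite unitmx_tr.
pose ff (j : 'I_tau) i := m i <= k j.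
pose gg (j : 'I_tau) i := k j <= m i.
have Hfg j : forall i, ff j i || gg j i by move=> i; exact: le_total.
have lt_k l j : (k l < k j) = (j < l)%N.
  case: (ltngtP j l) => h.
  - by rewrite kdec.
  - by rewrite lt_gtF // kdec.
  - by rewrite (val_inj h) ltxx ?ltnn.
have le_k l j : (k l <= k j) = (j <= l)%N by rewrite leNgt lt_k -leqNgt.
exists (fun j => P0 R n (ff j) (gg j) (invmx (b 0))^T (a 0)^T).
split.
  move=> j; split.
    exact: (@gl R n gamma m eps delta a b (k j) eps0 delta0 gunit ha hb ua0 ub0 hg).
  rewrite rk_P0 //; apply: eq_card => i; rewrite !inE /ff /gg.
  by rewrite eq_le.
split; first by move=> j; exact: rank_P0.
split.
  move=> j j' hj; split.
    apply/eqmxP; apply: eqmx_trans (eqmxP (Ker_P0 _ _ _ _ _ _ uA)) _.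
    apply: eqmx_trans _ (eqmx_sym (eqmxP (Dom_P0 _ _ _ _ _ _))).
    rewrite (@Dg_eq R n _ (ff j)); first exact: eqmx_refl.
    move=> i; rewrite /ff /gg; case: (mk i) => l ->.
    by rewrite !le_k -ltnNge -hj andb_idl // => /ltnW.
  apply/eqmxP; apply: eqmx_trans (eqmxP (Im_P0 _ _ _ _ _ _)) _.
  apply: eqmx_trans _ (eqmx_sym (eqmxP (Indef_P0 _ _ _ _ _ _ uB))).
  rewrite (@Dg_eq R n (gg j') (fun i => gg j i && ~~ ff j i)); first exact: eqmx_refl.
  move=> i; rewrite /ff /gg; case: (mk i) => l ->.
  by rewrite !le_k -ltnNge -hj ltnS andb_idl // => /leqW.
split.
  move=> j hj0; apply/eqmxP; apply: eqmx_trans (eqmxP (Dom_P0 _ _ _ _ _ _)) _.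
  rewrite (@Dg_eq R n _ (fun _ => true)) ?Dg1 ?mul1mx.
    by apply/eqmxP; rewrite submx1 sub1mx row_full_unit uB.
  by move=> i; rewrite /ff; case: (mk i) => l ->; rewrite le_k hj0.
split.
  move=> j hjl; apply/eqmxP; apply: eqmx_trans (eqmxP (Im_P0 _ _ _ _ _ _)) _.
  rewrite (@Dg_eq R n _ (fun _ => true)) ?Dg1 ?mul1mx.
    by apply/eqmxP; rewrite submx1 sub1mx row_full_unit uA.
  by move=> i; rewrite /gg; case: (mk i) => l ->; rewrite le_k -ltnS hjl ltn_ord.
move=> j; rewrite rk_P0 //; apply/card_gt0P.
case: (km j) => i hi; exists i; by rewrite inE /ff /gg hi lexx.
Qed.
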